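(* Let $\alpha\in[0,1)$ and let $G=(V,E)$ be a countable graph whose degrees are uniformly bounded by $\Delta$. Then there exists a non-vanishing equilibrium $\mu$ on $G$ with $\mu(e)\ge 2/\Delta^{1/(1-\alpha)}$ for all $e\in E$.
   Context: Edges are two-element subsets of $V$; $E_v=\{e\in E:v\in e\}$. A vector $\mu\in[0,\infty)^E$ is an equilibrium on $G$ if $\mu(e)=\sum_{v\in e}\mu(e)^\alpha/\sum_{e'\in E_v}\mu(e')^\alpha$ for every $e\in E$ with $\mu(e)>0$; it is non-vanishing if $\mu(e)>0$ for all $e\in E$. *)

(* Defs.v *)
From HB Require Import structures.
From mathcomp Require Import all_boot all_order all_algebra.
From mathcomp Require Import reals exp.
Set Implicit Arguments. Unset Strict Implicit. Unset Printing Implicit Defensive.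
Import Order.TTheory GRing.Theory Num.Theory.
Local Open Scope ring_scope.

(* The edge {u,v} is present iff
   v \in N u; E_v corresponds to the list N v (edge {v,w} for w in N v). *)
Definition simple_graph (V : eqType) (N : V -> seq V) : Prop :=
  (forall v, uniq (N v)) /\
  (forall u v, (u \in N v) = (v \in N u)) /\
  (forall v, v \notin N v).

Definition degree_bounded (V : eqType) (N : V -> seq V) (Delta : nat) : Prop :=
  forall v, (size (N v) <= Delta)%N.

(* A weight vector mu in [0,oo)^E, encoded as a function on ordered pairs
   that is symmetric on edges (so mu u v = mu({u,v})). *)
Definition edge_vector (R : realType) (V : eqType) (N : V -> seq V)
    (mu : V -> V -> R) : Prop :=
  forall u v, v \in N u -> mu u v = mu v u /\ 0 <= mu u v.

Definition equilibrium (R : realType) (alpha : R) (V : eqType)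
    (N : V -> seq V) (mu : V -> V -> R) : Prop :=
  edge_vector N mu /\
  forall u v, v \in N u -> 0 < mu u v ->
    mu u v = mu u v `^ alpha / (\sum_(w <- N u) mu u w `^ alpha)
           + mu u v `^ alpha / (\sum_(w <- N v) mu v w `^ alpha).

Definition non_vanishing (R : realType) (V : eqType) (N : V -> seq V)
    (mu : V -> V -> R) : Prop :=
  forall u v, v \in N u -> 0 < mu u v.

(* Main.v *)
Require Import Defs.
From HB Require Import structures.
From mathcomp Require Import all_boot all_order all_algebra.
From mathcomp Require Import reals exp.
From mathcomp Require Import all_classical all_reals all_analysis.
From mathcomp Require Import ring lra.
Set Implicit Arguments. Unset Strict Implicit. Unset Printing Implicit Defensive.
Import Order.TTheory GRing.Theory Num.Theory.
Import numFieldNormedType.Exports.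
Local Open Scope classical_set_scope.
Local Open Scope ring_scope.
Section Scalar.
Variable R : realType.

Lemma ln_lt_sub1 (y : R) : 0 < y -> y != 1 -> ln y < y - 1.
Proof.
move=> y0 y1.
set s := Num.sqrt y.
have s0 : 0 < s by rewrite sqrtr_gt0.
have ys : y = s * s by rewrite -expr2 sqr_sqrtr // ltW.
have s1 : s != 1 by apply: contraNneq y1 => e; rewrite ys e mulr1.
have lns : ln s <= s - 1.
  have := @le_ln1Dx R (s - 1); rewrite (addrC 1) subrK; apply; lra.
have -> : ln y = ln s + ln s by rewrite ys lnM // posrE.
rewrite ys.
have : (s < 1) || (1 < s) by rewrite -neq_lt.
case/orP => h; nra.
Qed.

Lemma young_tan (alpha x : R) : 0 < alpha -> alpha < 1 -> 0 <= x ->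
  x `^ alpha <= alpha * x + (1 - alpha).
Proof.
move=> a0 a1 x0.
have := @conjugate_powR R (x `^ alpha) 1 alpha^-1 (1 - alpha)^-1 (powR_ge0 _ _) ler01.
rewrite !invr_gt0 a0 subr_gt0 a1 => /(_ isT isT) h.
have e : alpha^-1^-1 + (1-alpha)^-1^-1 = 1 by rewrite !invrK; lra.
rewrite -[x `^ alpha]mulr1; apply: le_trans (h e) _.
rewrite -powRrM mulfV ?gt_eqF // powRr1 // powR1 !invrK mul1r mulrC.
by [].
Qed.

Lemma tangent (alpha t r : R) : 0 < alpha -> alpha < 1 -> 0 < t -> 0 < r ->
  t `^ alpha - r `^ alpha <= alpha * r `^ alpha * (t / r - 1).
Proof.
move=> a0 a1 t0 r0.
have tE : t = r * (t / r) by rewrite mulrC divfK ?gt_eqF.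
have y := young_tan a0 a1 (ltW (divr_gt0 t0 r0)).
rewrite {1}tE powRM ?(ltW r0) ?(ltW (divr_gt0 t0 r0)) //.
have rp := powR_gt0 alpha r0.
set b := r `^ alpha in rp *; set z := t / r in y *.
nra.
Qed.

End Scalar.
Section Cont.
Variables (R : realType) (T : topologicalType).
Implicit Types (f g : T -> R) (x : T).

Lemma cD f g x : {for x, continuous f} -> {for x, continuous g} ->
  {for x, continuous (fun y => f y + g y)}.
Proof. exact: continuousD. Qed.

Lemma cB f g x : {for x, continuous f} -> {for x, continuous g} ->
  {for x, continuous (fun y => f y - g y)}.
Proof. by move=> cf cg; apply: continuousD => //; apply: continuousN. Qed.

Lemma cM f g x : {for x, continuous f} -> {for x, continuous g} ->
  {for x, continuous (fun y => f y * g y)}.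
Proof. exact: continuousM. Qed.

Lemma cV f x : {for x, continuous f} -> f x != 0 ->
  {for x, continuous (fun y => (f y)^-1)}.
Proof. by move=> cf fx; apply: continuousV. Qed.

Lemma cC (k : R) x : {for x, continuous (fun _ : T => k)}.
Proof. exact: cst_continuous. Qed.

Lemma cln f x : {for x, continuous f} -> 0 < f x ->
  {for x, continuous (fun y => ln (f y))}.
Proof. by move=> cf fx; apply: (continuous_comp cf); apply: continuous_ln. Qed.

Lemma cexp f x : {for x, continuous f} ->
  {for x, continuous (fun y => expR (f y))}.
Proof. by move=> cf; apply: (continuous_comp cf); apply: continuous_expR. Qed.

Lemma csum (I : eqType) (s : seq I) (F : I -> T -> R) x :
  (forall i, i \in s -> {for x, continuous (F i)}) ->
  {for x, continuous (fun y => \sum_(i <- s) F i y)}.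
Proof.
elim: s => [|a s IH] H.
  under [X in {for x, continuous X}]eq_fun do rewrite big_nil.
  exact: cC.
under [X in {for x, continuous X}]eq_fun do rewrite big_cons.
apply: cD; first by apply: H; rewrite inE eqxx.
by apply: IH => i iis; apply: H; rewrite inE iis orbT.
Qed.

End Cont.
Section Main.
Variables (R : realType) (alpha : R) (Delta : nat).
Hypotheses (a0 : 0 < alpha) (a1 : alpha < 1) (D1 : (0 < Delta)%N).

Definition cc : R := 2 / (Delta%:R `^ (1 - alpha)^-1).
Definition cl (t : R) : R := Num.max cc (Num.min 2 t).
Definition PP (t : R) : R := expR (alpha * ln t).

Lemma D_gt0 : 0 < Delta%:R :> R. Proof. by rewrite ltr0n. Qed.
Lemma D_ge1 : 1 <= Delta%:R :> R. Proof. by rewrite ler1n. Qed.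

Lemma Db_ge1 : 1 <= Delta%:R `^ (1 - alpha)^-1 :> R.
Proof.
have := @ler_powR R _ D_ge1 0 ((1-alpha)^-1); rewrite powRr0; apply.
by rewrite invr_ge0 subr_ge0 ltW.
Qed.

Lemma cc_gt0 : 0 < cc.
Proof. by rewrite /cc divr_gt0 // (lt_le_trans ltr01 Db_ge1). Qed.

Lemma cc_le2 : cc <= 2.
Proof.
rewrite /cc ler_pdivrMr ?(lt_le_trans ltr01 Db_ge1) //.
by rewrite ler_peMr // Db_ge1.
Qed.

Lemma cl_ge t : cc <= cl t. Proof. by rewrite /cl le_max lexx. Qed.
Lemma cl_gt0 t : 0 < cl t. Proof. exact: lt_le_trans cc_gt0 (cl_ge t). Qed.
Lemma cl_le2 t : cl t <= 2.
Proof. by rewrite /cl ge_max cc_le2 ge_min lexx. Qed.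
Lemma cl_id t : cc <= t <= 2 -> cl t = t.
Proof.
case/andP => h1 h2; rewrite /cl.
have -> : Num.min 2 t = t by apply/min_idPr.
by apply/max_idPr.
Qed.

Lemma cl_cont : continuous cl.
Proof.
have h1 : continuous (fun t : R => Num.min 2 t).
  have h := @min_fun_continuous _ R R (fun=> 2) id (@cst_continuous _ R 2).
  have h0 : continuous (@id R) by move=> x; exact: cvg_id.
  exact: (h h0).
have h := @max_fun_continuous _ R R (fun=> cc) _ (@cst_continuous _ R cc) h1.
exact: h.
Qed.

Lemma powR_PP t : 0 < t -> t `^ alpha = PP t.
Proof. by move=> t0; rewrite /powR gt_eqF. Qed.

Lemma PP_gt0 t : 0 < PP t. Proof. exact: expR_gt0. Qed.

Lemma cPP (T : topologicalType) (f : T -> R) x : {for x, continuous f} -> 0 < f x ->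
  {for x, continuous (fun y => PP (f y))}.
Proof.
move=> cf fx; apply: cexp; apply: cM; first exact: cC.
exact: cln.
Qed.

Lemma ccl (T : topologicalType) (f : T -> R) x : {for x, continuous f} ->
  {for x, continuous (fun y => cl (f y))}.
Proof. by move=> cf; apply: (continuous_comp cf); apply: cl_cont. Qed.

Lemma invpowR (y : R) : 0 < y -> (y^-1) `^ alpha = (y `^ alpha)^-1.
Proof.
move=> y0; rewrite /powR !gt_eqF ?invr_gt0 ?expR_gt0 //.
by rewrite lnV ?posrE // mulrN expRN.
Qed.

Lemma cc_id : cc * (Delta%:R * 2 `^ alpha) = 2 * cc `^ alpha.
Proof.
rewrite /cc.
set D : R := Delta%:R; set b := (1 - alpha)^-1.
have Dp : 0 < D := D_gt0.
have Dbp : 0 < D `^ b by apply: powR_gt0.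
rewrite powRM ?ler0n ?invr_ge0 ?(ltW Dbp) // invpowR // -powRrM.
have e : D `^ b = D * D `^ (b * alpha).
  have eb : b = 1 + b * alpha.
    have hb : b * (1 - alpha) = 1 by rewrite /b mulVf // subr_eq0 gt_eqF.
    transitivity (b * (1 - alpha) + b * alpha); first ring.
    by rewrite hb.
  rewrite {1}eb powRD; last by apply/implyP => _; rewrite gt_eqF.
  by rewrite powRr1 // ltW.
have Dba : 0 < D `^ (b * alpha) by apply: powR_gt0.
rewrite e; field.
by rewrite !gt_eqF.
Qed.


Definition hh (Au Av t : R) := cl t - cl t `^ alpha / (Au + cl t `^ alpha)
   - cl t `^ alpha / (Av + cl t `^ alpha).
Definition psi (Au Av t : R) := ln (Au + cl t `^ alpha) + ln (Av + cl t `^ alpha)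
   - alpha * cl t.

Lemma hh_cont Au Av : 0 <= Au -> 0 <= Av -> continuous (hh Au Av).
Proof.
move=> hu hv t.
have -> : hh Au Av = fun t => cl t - PP (cl t) * (Au + PP (cl t))^-1
   - PP (cl t) * (Av + PP (cl t))^-1.
  by apply: funext => s; rewrite /hh powR_PP // cl_gt0.
have c1 : {for t, continuous cl} by apply: cl_cont.
have c2 : {for t, continuous (fun s => PP (cl s))} by apply: cPP => //; apply: cl_gt0.
apply: (cB (f := fun s => cl s - PP (cl s) * (Au + PP (cl s))^-1)); first apply: cB => //.
  apply: cM => //; apply: cV; first by apply: cD => //; apply: cC.
  by rewrite gt_eqF // ltr_wpDl // PP_gt0.
apply: cM => //; apply: cV; first by apply: cD => //; apply: cC.
by rewrite gt_eqF // ltr_wpDl // PP_gt0.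
Qed.

Lemma root_ex Au Av : 0 <= Au -> 0 <= Av ->
  Au + 2 `^ alpha <= Delta%:R * 2 `^ alpha ->
  Av + 2 `^ alpha <= Delta%:R * 2 `^ alpha ->
  exists2 r, cc <= r <= 2 & hh Au Av r = 0.
Proof.
move=> hu hv bu bv.
have c2 := cc_le2.
have c0 := cc_gt0.
have h2 : 0 <= hh Au Av 2.
  rewrite /hh cl_id ?c2 ?lexx //.
  have p2 : 0 < 2 `^ alpha :> R by apply: powR_gt0.
  have f1 : 2 `^ alpha / (Au + 2 `^ alpha) <= 1.
    by rewrite ler_pdivrMr ?mul1r ?ltr_wpDl // lerDr.
  have f2 : 2 `^ alpha / (Av + 2 `^ alpha) <= 1.
    by rewrite ler_pdivrMr ?mul1r ?ltr_wpDl // lerDr.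
  lra.
have hc : hh Au Av cc <= 0.
  rewrite /hh cl_id ?c2 ?lexx //.
  set a := cc `^ alpha; set K := Delta%:R * 2 `^ alpha.
  have ap : 0 < a by apply: powR_gt0.
  have p2 : 0 < 2 `^ alpha :> R by apply: powR_gt0.
  have Kp : 0 < K by rewrite mulr_gt0 // D_gt0.
  have a2 : a <= 2 `^ alpha.
    by rewrite /a ge0_ler_powR ?nnegrE ?(ltW c0) ?ler0n ?(ltW a0).
  have ccE : cc = 2 * a / K by rewrite -cc_id /K mulfK // gt_eqF.
  have g u : 0 <= u -> u + 2 `^ alpha <= K -> a / K <= a / (u + a).
    move=> u0 uK; rewrite ler_wpM2l ?(ltW ap) // lef_pV2 ?posrE ?ltr_wpDl //.
    lra.
  have := g _ hu bu; have := g _ hv bv.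
  rewrite ccE; lra.
have hI : Num.min (hh Au Av cc) (hh Au Av 2) <= 0 <= Num.max (hh Au Av cc) (hh Au Av 2).
  apply/andP; split.
    by rewrite ge_min hc.
  by rewrite le_max h2 orbT.
have [r] := @IVT R (hh Au Av) cc 2 0 c2 (continuous_subspaceT (hh_cont hu hv)) hI.
by rewrite in_itv /= => rr hr; exists r.
Qed.


Lemma ln_step (A a b : R) : 0 <= A -> 0 < a -> 0 < b -> a != b ->
  ln (A + a) - ln (A + b) < (a - b) / (A + b).
Proof.
move=> A0 ap bp ab.
have Sa : 0 < A + a by rewrite ltr_wpDl.
have Sb : 0 < A + b by rewrite ltr_wpDl.
rewrite -ln_div ?posrE //.
have -> : (a - b) / (A + b) = (A + a) / (A + b) - 1.
  by field; rewrite gt_eqF.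
apply: ln_lt_sub1; first by rewrite divr_gt0.
apply: contraNneq ab => h.
have : A + a = A + b by move/eqP: h => /eqP /divr1_eq.
by move/addrI ->.
Qed.

Lemma strict Au Av t r : 0 <= Au -> 0 <= Av -> cc <= t <= 2 -> cc <= r <= 2 ->
  t != r -> hh Au Av r = 0 -> psi Au Av t < psi Au Av r.
Proof.
move=> hu hv ht hr tr hr0.
have c0 := cc_gt0.
have t0 : 0 < t by case/andP: ht => h _; exact: lt_le_trans c0 h.
have r0 : 0 < r by case/andP: hr => h _; exact: lt_le_trans c0 h.
move: hr0; rewrite /hh /psi !cl_id //.
set a := t `^ alpha; set b := r `^ alpha.
have ap : 0 < a by apply: powR_gt0.
have bp : 0 < b by apply: powR_gt0.
have ab : a != b.
  have : (t < r) || (r < t) by rewrite -neq_lt.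
  have ht0 : t \is Num.nneg by rewrite nnegrE ltW.
  have hr1 : r \is Num.nneg by rewrite nnegrE ltW.
  case/orP => h; rewrite neq_lt /a /b.
    by rewrite (gt0_ltr_powR a0 ht0 hr1 h).
  by rewrite (gt0_ltr_powR a0 hr1 ht0 h) orbT.
have Su : 0 < Au + b by rewrite ltr_wpDl.
have Sv : 0 < Av + b by rewrite ltr_wpDl.
have l1 := ln_step hu ap bp ab.
have l2 := ln_step hv ap bp ab.
have tg := tangent a0 a1 t0 r0; rewrite -/a -/b in tg.
set W := (Au + b)^-1 + (Av + b)^-1.
have Wp : 0 < W by rewrite addr_gt0 // invr_gt0.
move=> hr0.
have rE : r = b * W by rewrite /W; apply/eqP; rewrite -subr_eq0 -hr0; apply/eqP; ring.
have E1 : (a - b) / (Au + b) + (a - b) / (Av + b) = (a - b) * W by rewrite /W; ring.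
have E2 : (a - b) * W <= alpha * (t - r).
  apply: le_trans (ler_wpM2r (ltW Wp) tg) _.
  have -> : alpha * b * (t / r - 1) * W = alpha * (t / r - 1) * (b * W) by ring.
  rewrite -rE.
  have -> : alpha * (t / r - 1) * r = alpha * (t - r) by field; rewrite gt_eqF.
  exact: lexx.
lra.
Qed.

Lemma max_root Au Av t0 : 0 <= Au -> 0 <= Av ->
  Au + 2 `^ alpha <= Delta%:R * 2 `^ alpha ->
  Av + 2 `^ alpha <= Delta%:R * 2 `^ alpha ->
  cc <= t0 <= 2 -> (forall t, cc <= t <= 2 -> psi Au Av t <= psi Au Av t0) ->
  hh Au Av t0 = 0.
Proof.
move=> hu hv bu bv ht hmax.
have [r hr hr0] := root_ex hu hv bu bv.
have [->|ne] := eqVneq t0 r => //.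
have := strict hu hv ht hr ne hr0.
by rewrite ltNge hmax.
Qed.

End Main.
HB.instance Definition _ (I : Type) (R : realType) :=
  isPointed.Build (prod_topology (fun _ : I => R)) (fun _ => 0).
Section Graph.
Variables (R : realType) (alpha : R) (V : countType) (N : V -> seq V) (Delta : nat).
Hypotheses (a0 : 0 < alpha) (a1 : alpha < 1) (D1 : (0 < Delta)%N)
  (hG : simple_graph N) (hD : degree_bounded N Delta).

Local Notation c := (cc alpha Delta).
Local Notation cL := (cl alpha Delta).

Definition key (u v : V) : V * V :=
  if (pickle u <= pickle v)%N then (u, v) else (v, u).

Definition mu (x : V * V -> R) u v := cL (x (key u v)).
Definition SS (x : V * V -> R) u := \sum_(w <- N u) mu x u w `^ alpha.

Lemma key_sym u v : key u v = key v u.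
Proof.
rewrite /key; case: leqP => h1; case: leqP => h2 //.
  have e : pickle u = pickle v by apply/eqP; rewrite eqn_leq h1 h2.
  by rewrite (pcan_inj pickleK e).
by move: (ltn_trans h1 h2); rewrite ltnn.
Qed.

Lemma key_inj a b u v : key a b = key u v -> (a = u /\ b = v) \/ (a = v /\ b = u).
Proof.
rewrite /key; case: leqP => _; case: leqP => _ [-> ->]; tauto.
Qed.

Lemma N_sym u v : (u \in N v) = (v \in N u).
Proof. by case: hG => _ [h _]; apply: h. Qed.

Lemma N_uniq u : uniq (N u). Proof. by case: hG. Qed.

Lemma N_loop u v : v \in N u -> u != v.
Proof. case: hG => _ [_ h] vN; apply/eqP => e; move: vN; rewrite -e; by rewrite (negbTE (h u)). Qed.

Lemma mu_sym x u v : mu x u v = mu x v u.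
Proof. by rewrite /mu key_sym. Qed.

Lemma mu_ge x u v : c <= mu x u v. Proof. exact: cl_ge. Qed.
Lemma mu_le2 x u v : mu x u v <= 2. Proof. exact: cl_le2. Qed.
Lemma mu_gt0 x u v : 0 < mu x u v. Proof. exact: cl_gt0. Qed.

Lemma sum_le_size (I : Type) (s : seq I) (f : I -> R) B :
  (forall i, f i <= B) -> \sum_(i <- s) f i <= (size s)%:R * B.
Proof.
move=> h; elim: s => [|a s IH]; first by rewrite big_nil mul0r.
by rewrite big_cons /= -addn1 natrD mulrDl mul1r addrC lerD.
Qed.

Lemma SS_le x u : SS x u <= Delta%:R * 2 `^ alpha.
Proof.
have p2 : 0 <= 2 `^ alpha :> R by apply: powR_ge0.
apply: le_trans (sum_le_size _ (B := 2 `^ alpha) _) _.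
  move=> w; rewrite ge0_ler_powR ?nnegrE ?(ltW a0) ?(ltW (mu_gt0 _ _ _)) //.
  exact: mu_le2.
by rewrite ler_wpM2r // ler_nat; apply: hD.
Qed.

Lemma SS_gt0 x u : N u != [::] -> 0 < SS x u.
Proof.
rewrite /SS; case: (N u) => [|w s] // _.
rewrite big_cons ltr_pwDl ?powR_gt0 ?mu_gt0 //.
by apply: sumr_ge0 => i _; apply: powR_ge0.
Qed.

Lemma N_nil u v : v \in N u -> N u != [::].
Proof. by case: (N u). Qed.

Definition upd (x : V * V -> R) q t : V * V -> R := fun q' => if q' == q then t else x q'.

Lemma SS_upd x u v t : v \in N u ->
  SS (upd x (key u v) t) u = \sum_(w <- N u | w != v) mu x u w `^ alpha + cL t `^ alpha.
Proof.
move=> vN; rewrite /SS (bigD1_seq v) //=; last exact: N_uniq.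
rewrite addrC; congr (_ + _); last by rewrite /mu /upd eqxx.
apply: eq_bigr => w wv; rewrite /mu /upd; case: eqP => // /key_inj.
by case=> [[_ e]|[e1 e2]]; [move: wv; rewrite e eqxx | move: wv; rewrite e2 e1 eqxx].
Qed.

Lemma SS_upd_other x q t w : (forall z, key w z != q) -> SS (upd x q t) w = SS x w.
Proof.
move=> h; apply: eq_bigr => z _; rewrite /mu /upd.
by rewrite (negbTE (h z)).
Qed.


Local Notation X := {ptws (V * V) -> R}.

Lemma cproj q (x : X) : {for x, continuous (fun y : X => y q)}.
Proof. exact: (@proj_continuous _ (fun _ : V * V => R) q). Qed.

Lemma cmu u v (x : X) : {for x, continuous (fun y : X => mu y u v)}.
Proof. by apply: ccl; apply: cproj. Qed.

Lemma cmuP u v (x : X) : {for x, continuous (fun y : X => mu y u v `^ alpha)}.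
Proof.
have -> : (fun y : X => mu y u v `^ alpha) = fun y : X => PP alpha (mu y u v).
  by apply: funext => y; rewrite powR_PP // mu_gt0.
by apply: cPP; [apply: cmu | apply: mu_gt0].
Qed.

Lemma cSS u (x : X) : {for x, continuous (fun y : X => SS y u)}.
Proof. by rewrite /SS; apply: csum => w _; apply: cmuP. Qed.

Definition gg (x : V * V -> R) u v :=
  mu x u v - mu x u v `^ alpha / SS x u - mu x u v `^ alpha / SS x v.

Lemma cgg u v (x : X) : v \in N u -> {for x, continuous (fun y : X => gg y u v)}.
Proof.
move=> vN.
have nu := SS_gt0 x (N_nil vN).
have nv : 0 < SS x v by apply: SS_gt0; apply: (@N_nil v u); rewrite N_sym.
apply: (cB (f := fun y : X => mu y u v - mu y u v `^ alpha / SS y u)).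
  apply: cB; first exact: cmu.
  by apply: cM; [apply: cmuP | apply: cV; [apply: cSS | rewrite gt_eqF]].
by apply: cM; [apply: cmuP | apply: cV; [apply: cSS | rewrite gt_eqF]].
Qed.


Lemma finite_step (s : seq (V * V)) : (forall p, p \in s -> p.2 \in N p.1) ->
  exists x : X, (forall q, c <= x q <= 2) /\ (forall p, p \in s -> gg x p.1 p.2 = 0).
Proof.
move=> hs.
set Es := undup [seq key p.1 p.2 | p <- s].
set Vs := undup (flatten [seq [:: p.1; p.2] | p <- s]).
pose A q : set R := if q \in Es then (`[c, 2]%classic : set R) else [set 2].
pose Dom := [set f : X | forall q, A q (f q)].
have c2 : c <= 2 by apply: cc_le2.
have cDom : compact Dom.
  apply: (@tychonoff _ (fun _ : V * V => R) A) => q.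
  rewrite /A; case: ifP => _; [exact: segment_compact | exact: compact_set1].
have nDom : Dom !=set0.
  exists (fun _ => 2) => q; rewrite /A; case: ifP => _ //=.
  by rewrite in_itv /= c2 lexx.
pose Phi := fun x : X => \sum_(w <- Vs) ln (SS x w) - alpha * \sum_(q <- Es) cL (x q).
have Vsn w : w \in Vs -> N w != [::].
  rewrite mem_undup => /flatten_mapP [p ps]; rewrite !inE => /orP [] /eqP ->.
    exact: N_nil (hs p ps).
  by apply: (@N_nil _ p.1); rewrite N_sym; apply: hs.
have cPhi : {within Dom, continuous Phi}.
  apply: continuous_subspaceT => x.
  apply: (cB (f := fun x : X => \sum_(w <- Vs) ln (SS x w))
     (g := fun x : X => alpha * \sum_(q <- Es) cL (x q))).
    apply: csum => w wV; apply: cln; first exact: cSS.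
    exact: SS_gt0 (Vsn w wV).
  apply: cM; first exact: cC.
  by apply: csum => q _; apply: ccl; apply: cproj.
have [xs] := compact_EVT_max nDom cDom cPhi.
rewrite inE => xsD xsmax.
have inA q : c <= xs q <= 2.
  have := xsD q; rewrite /A; case: ifP => _ /=; first by rewrite in_itv.
  by move=> ->; rewrite c2 lexx.
exists xs; split => // -[u v] ps /=.
have vN : v \in N u := hs _ ps.
have uN : u \in N v by rewrite N_sym.
set q := key u v.
have qE : q \in Es by rewrite mem_undup; apply/mapP; exists (u, v).
set t0 := xs q.
have t0I : c <= t0 <= 2 := inA q.
set Au := \sum_(w <- N u | w != v) mu xs u w `^ alpha.
set Av := \sum_(w <- N v | w != u) mu xs v w `^ alpha.
pose y t := upd xs q t.
have yt0 : y t0 = xs by apply: funext => q'; rewrite /y /upd; case: eqP => // ->.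
have SSu t : SS (y t) u = Au + cL t `^ alpha by rewrite /y SS_upd // addrC.
have SSv t : SS (y t) v = Av + cL t `^ alpha.
  by rewrite /y /q key_sym SS_upd // addrC.
have uV : u \in Vs.
  by rewrite mem_undup; apply/flatten_mapP; exists (u, v) => //; rewrite inE eqxx.
have vV : v \in [seq w <- Vs | w != u].
  rewrite mem_filter eq_sym N_loop //=.
  by rewrite mem_undup; apply/flatten_mapP; exists (u, v) => //; rewrite !inE eqxx orbT.
set K1 := \sum_(w <- [seq w <- Vs | w != u] | w != v) ln (SS xs w).
set K2 := \sum_(q' <- Es | q' != q) cL (xs q').
have PhiE t : Phi (y t) = psi alpha Delta Au Av t + (K1 - alpha * K2).
  rewrite /Phi (bigD1_seq u) //=; last exact: undup_uniq.
  rewrite -big_filter (bigD1_seq v) //=; last by rewrite filter_uniq // undup_uniq.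
  rewrite (bigD1_seq q) //=; last exact: undup_uniq.
  have -> : \sum_(w <- [seq w <- Vs | w != u] | w != v) ln (SS (y t) w) = K1.
    rewrite /K1 big_seq_cond [RHS]big_seq_cond; apply: eq_bigr => w /andP [].
    rewrite mem_filter => /andP [wu _] wv.
    rewrite /y SS_upd_other //.
    move=> z; apply/eqP => /key_inj [[e _]|[e _]].
      by move: wu; rewrite e eqxx.
    by move: wv; rewrite e eqxx.
  have -> : \sum_(q' <- Es | q' != q) cL (y t q') = K2.
    by apply: eq_bigr => q' hq; rewrite /y /upd (negbTE hq).
  rewrite SSu SSv /psi /y /upd eqxx.
  ring.
have hmax t : c <= t <= 2 -> psi alpha Delta Au Av t <= psi alpha Delta Au Av t0.
  move=> ht.
  have Dy : y t \in Dom.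
    rewrite inE => q'; rewrite /y /upd /A; case: eqP => [->|_].
      by rewrite qE /= in_itv /=.
    exact: xsD.
  have := xsmax _ Dy; rewrite -{1}yt0 !PhiE.
  by rewrite lerD2r.
have Au0 : 0 <= Au by apply: sumr_ge0 => w _; apply: powR_ge0.
have Av0 : 0 <= Av by apply: sumr_ge0 => w _; apply: powR_ge0.
have c2I : c <= 2 <= (2:R) by rewrite c2 lexx.
have bu : Au + 2 `^ alpha <= Delta%:R * 2 `^ alpha.
  by have := SS_le (y 2) u; rewrite SSu cl_id.
have bv : Av + 2 `^ alpha <= Delta%:R * 2 `^ alpha.
  by have := SS_le (y 2) v; rewrite SSv cl_id.
have := max_root a0 a1 D1 Au0 Av0 bu bv t0I hmax.
have SSu0 := SSu t0; rewrite yt0 in SSu0.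
have SSv0 := SSv t0; rewrite yt0 in SSv0.
by rewrite /gg SSu0 SSv0 /mu -/q -/t0 /hh.
Qed.


Lemma main_pos : exists mu0 : V -> V -> R,
  equilibrium alpha N mu0 /\ non_vanishing N mu0 /\
  (forall u v, v \in N u -> c <= mu0 u v).
Proof.
pose Box := [set f : X | forall q : V * V, (`[c, 2]%classic : set R) (f q)].
have cBox : compact Box.
  by apply: (@tychonoff _ (fun _ : V * V => R) (fun _ => `[c, 2]%classic)) => q; exact: segment_compact.
pose Dset := [set p : V * V | p.2 \in N p.1].
pose G p := (fun x : X => gg x p.1 p.2) @^-1` [set 0 : R].
pose F p := Box `&` G p.
have := cBox; rewrite compact_In0 => /(_ _ Dset F) [].
- exists G => // p Dp; apply: preimage_closed; last exact: closed_eq.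
  by move=> x _; apply: cgg.
- move=> D' sD'.
  have [x [xB xg]] := @finite_step (finmap.enum_fset D') (fun p pD => set_mem (sD' p pD)).
  exists x => p /= pD; split.
    by move=> q; rewrite /= in_itv /=; apply: xB.
  exact: xg.
move=> x hx.
exists (mu x); split; last split.
- split.
    move=> u v _; split; first exact: mu_sym.
    exact: ltW (mu_gt0 _ _ _).
  move=> u v vN _.
  have [_] := hx (u, v) vN.
  rewrite /G /= /gg /SS => h.
  lra.
- by move=> u v _; apply: mu_gt0.
- by move=> u v _; apply: mu_ge.
Qed.

End Graph.
Lemma sum1_size (R : realType) (T : Type) (s : seq T) :
  \sum_(i <- s) (1 : R) = (size s)%:R.
Proof.
elim: s => [|a s IH]; first by rewrite big_nil.
by rewrite big_cons IH /= -addn1 natrD addrC.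
Qed.

Lemma sum_pow0 (R : realType) (T : Type) (s : seq T) (f : T -> R) :
  \sum_(i <- s) f i `^ 0 = (size s)%:R.
Proof.
rewrite -(sum1_size R s); apply: eq_bigr => i _; exact: powRr0.
Qed.

Unset Implicit Arguments.
Theorem mainTheorem2 (R : realType) (alpha : R) (V : countType)
    (N : V -> seq V) (Delta : nat) :
  0 <= alpha -> alpha < 1 ->
  simple_graph N -> degree_bounded N Delta ->
  exists mu : V -> V -> R,
    equilibrium alpha N mu /\ non_vanishing N mu /\
    (forall u v, v \in N u ->
       2 / (Delta%:R `^ (1 - alpha)^-1) <= mu u v).
Proof.
move=> a0 a1 hG hD.
have [D0|D1] := posnP Delta.
  have Nn u v : v \in N u = false.
    by have := hD u; rewrite D0 leqn0 size_eq0 => /eqP ->.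
  exists (fun _ _ => 1); split; last split.
  - by split=> [u v|u v]; rewrite Nn.
  - by move=> u v; rewrite Nn.
  - by move=> u v; rewrite Nn.
case/boolP: (alpha == 0) => [/eqP a00|an0]; last first.
  have a0' : 0 < alpha by rewrite lt_neqAle eq_sym an0 a0.
  exact: main_pos.
subst alpha.
have Nsz u v : v \in N u -> 0 < (size (N u))%:R :> R.
  by move=> vN; rewrite ltr0n; case: (N u) vN.
have Nle u : (size (N u))%:R <= Delta%:R :> R by rewrite ler_nat; apply: hD.
have Nsym u v : (u \in N v) = (v \in N u) by case: hG => _ [h _]; apply: h.
exists (fun u v => (size (N u))%:R^-1 + (size (N v))%:R^-1); split; last split.
- split.
    move=> u v vN; split; first by rewrite addrC.
    by rewrite addr_ge0 // invr_ge0 ler0n.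
  move=> u v vN _.
  rewrite !powRr0 !sum_pow0 !div1r.
  by [].
- move=> u v vN.
  have uN : u \in N v by rewrite Nsym.
  by rewrite addr_gt0 // invr_gt0; [apply: (Nsz u v) | apply: (Nsz v u)].
- move=> u v vN.
  have uN : u \in N v by rewrite Nsym.
  rewrite subr0 invr1 powRr1 ?ler0n //.
  have Dp : 0 < Delta%:R :> R by rewrite ltr0n.
  have h1 : Delta%:R^-1 <= (size (N u))%:R^-1 :> R.
    by rewrite lef_pV2 ?posrE ?(Nsz u v) //.
  have h2 : Delta%:R^-1 <= (size (N v))%:R^-1 :> R.
    by rewrite lef_pV2 ?posrE ?(Nsz v u) //.
  rewrite mulrC; lra.
Qed.
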